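(* Let $n\ge1$. For every $0\le i<n$, $|\mathrm{I}A^2_{n,i}|=|\mathrm{I}B^2_{n,i}|$.
   Context: Fix $n\ge1$. $\mathrm{SBC}(n,0)=0$, $\mathrm{SBC}(n,i)=\sum_{j=0}^{i-1}\binom{n}{j}$ for $1\le i\le n+1$. For $0\le k<2^n$, $\mathrm{IStep}(n,k)$ is the unique $i\in\{0,\ldots,n\}$ with $\mathrm{SBC}(n,i)\le k<\mathrm{SBC}(n,i+1)$; $\mathrm{Weight}(k)$ is the number of 1's in the binary representation of $k$. For $0\le i\le n$: $\mathrm{I}A_{n,i}=\{k<2^n:\mathrm{IStep}(n,k)=i\}$, $\mathrm{I}B_{n,i}=\{k<2^n:\mathrm{Weight}(k)=i\}$, $\mathrm{I}A^1_{n,i}=\mathrm{I}A_{n,i}\setminus\mathrm{I}B_{n,i}$, $\mathrm{I}B^1_{n,i}=\mathrm{I}B_{n,i}\setminus\mathrm{I}A_{n,i}$. For $0\le i,j\le n$ with $i\ne j$: $\mathrm{I}C^1_{n,i,j}=\mathrm{I}A^1_{n,i}\cap\mathrm{I}B^1_{n,j}$, $\gamma^1_{n,i,j}=|\mathrm{I}C^1_{n,i,j}|$, and $\mathrm{I}\overline{C}^1_{n,i,j}$ is: all of $\mathrm{I}C^1_{n,i,j}$ if $\gamma^1_{n,i,j}\le\gamma^1_{n,j,i}$; the $\gamma^1_{n,j,i}$ smallest elements of $\mathrm{I}C^1_{n,i,j}$ if $\gamma^1_{n,i,j}>\gamma^1_{n,j,i}$ and $i>j$; the $\gamma^1_{n,j,i}$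 largest elements of $\mathrm{I}C^1_{n,i,j}$ if $\gamma^1_{n,i,j}>\gamma^1_{n,j,i}$ and $i<j$. Finally $\mathrm{I}A^2_{n,i}=\mathrm{I}A^1_{n,i}\setminus\bigcup_{j\ne i}\mathrm{I}\overline{C}^1_{n,i,j}$ and $\mathrm{I}B^2_{n,i}=\mathrm{I}B^1_{n,i}\setminus\bigcup_{j\ne i}\mathrm{I}\overline{C}^1_{n,j,i}$, where $j$ ranges over $\{0,\ldots,n\}\setminus\{i\}$. *)

(* Defs.v *)
(* Subsets of {0,...,2^n-1} are represented as
   increasing duplicate-free sequences of nat (filters of iota 0 (2^n)),
   so cardinality = size and "the m smallest/largest elements" = take/drop. *)
From mathcomp Require Import all_boot.
Set Implicit Arguments. Unset Strict Implicit. Unset Printing Implicit Defensive.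

Definition SBC (n i : nat) : nat := \sum_(j < i) 'C(n, j).

Definition IStep (n k : nat) : nat :=
  find (fun i => (SBC n i <= k) && (k < SBC n i.+1)) (iota 0 n.+1).

(* number of 1's in the binary representation of k: bit j of k is odd (k / 2^j);
   all bits of index >= k are 0 since 2^j > k. *)
Definition Weight (k : nat) : nat := \sum_(j < k) odd (k %/ 2 ^ j).

Definition univ (n : nat) : seq nat := iota 0 (2 ^ n).

Definition IA (n i : nat) : seq nat := [seq k <- univ n | IStep n k == i].
Definition IB (n i : nat) : seq nat := [seq k <- univ n | Weight k == i].
Definition IA1 (n i : nat) : seq nat := [seq k <- IA n i | k \notin IB n i].
Definition IB1 (n i : nat) : seq nat := [seq k <- IB n i | k \notin IA n i].
Definition IC1 (n i j : nat) : seq nat := [seq k <- IA1 n i | k \in IB1 n j].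
Definition gamma1 (n i j : nat) : nat := size (IC1 n i j).

(* IC1 n i j is sorted increasingly, so take = smallest, drop = largest *)
Definition ICbar1 (n i j : nat) : seq nat :=
  if gamma1 n i j <= gamma1 n j i then IC1 n i j
  else if j < i then take (gamma1 n j i) (IC1 n i j)
  else drop (gamma1 n i j - gamma1 n j i) (IC1 n i j).

Definition IA2 (n i : nat) : seq nat :=
  [seq k <- IA1 n i |
     ~~ has (fun j => (j != i) && (k \in ICbar1 n i j)) (iota 0 n.+1)].
Definition IB2 (n i : nat) : seq nat :=
  [seq k <- IB1 n i |
     ~~ has (fun j => (j != i) && (k \in ICbar1 n j i)) (iota 0 n.+1)].

(* Main.v *)
Require Import Defs.
From mathcomp Require Import all_boot zify.

Lemma countE (T : Type) (p : pred T) (s : seq T) : count p s = \sum_(x <- s) p x.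
Proof. by elim: s => [|x s IH]; rewrite ?big_nil ?big_cons //= IH. Qed.

Lemma SBCS n i : SBC n i.+1 = SBC n i + 'C(n, i).
Proof. by rewrite /SBC big_ord_recr. Qed.

Lemma SBC_mono n i j : i <= j -> SBC n i <= SBC n j.
Proof.
elim: j => [|j IH]; first by rewrite leqn0 => /eqP->.
rewrite leq_eqVlt => /orP[/eqP->//|]; rewrite ltnS => /IH h.
by rewrite SBCS; apply: leq_trans h (leq_addr _ _).
Qed.

Lemma SBC_full n : SBC n n.+1 = 2 ^ n.
Proof.
rewrite /SBC -[2]/(1+1) expnDn; apply: eq_bigr => i _.
by rewrite !exp1n !muln1.
Qed.

Lemma IStepE n k i : i <= n ->
  (IStep n k == i) = (SBC n i <= k < SBC n i.+1).
Proof.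
move=> hi; rewrite /IStep.
set P := (fun i => (SBC n i <= k) && (k < SBC n i.+1)).
change ((find P (iota 0 n.+1) == i) = P i).
case hP: (P i); last first.
  apply: negbTE; apply/eqP => hf.
  have hh : has P (iota 0 n.+1) by rewrite has_find size_iota hf ltnS.
  by move: (nth_find 0 hh); rewrite hf nth_iota ?ltnS // add0n /= hP.
apply/eqP; case: (ltngtP (find P (iota 0 n.+1)) i) => // hf.
- have hh : has P (iota 0 n.+1) by rewrite has_find size_iota; lia.
  move: (nth_find 0 hh); rewrite nth_iota; last by lia.
  rewrite add0n; set f := find _ _ in hf *.
  move: hP; rewrite /P => /andP[h1 _] /andP[_ h2].
  have := @SBC_mono n _ _ hf; lia.
- by move: (before_find 0 hf); rewrite nth_iota ?ltnS // add0n /= hP.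
Qed.

Lemma count_interval a b N : count (fun k => a <= k < b) (iota 0 N) = minn b N - minn a N.
Proof.
elim: N => [|N IH]; first by rewrite !minn0.
rewrite -addn1 iotaD count_cat IH /= add0n addn0.
case: (leqP a N); case: (ltnP N b) => ? ?; lia.
Qed.

Lemma sizeIA n i : i <= n -> size (IA n i) = 'C(n, i).
Proof.
move=> hi; rewrite /IA size_filter /univ.
rewrite (eq_count (a2 := fun k => SBC n i <= k < SBC n i.+1)); last by move=> k; rewrite IStepE.
have h1 : SBC n i.+1 <= 2 ^ n by rewrite -SBC_full; apply: SBC_mono.
have h2 := @SBC_mono n _ _ (leqnSn i).
rewrite count_interval; rewrite SBCS in h1 h2 *; lia.
Qed.
Lemma WeightN N k : k <= N -> Weight k = \sum_(j < N) odd (k %/ 2 ^ j).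
Proof.
move=> hk; rewrite /Weight (big_ord_widen N (fun j => (odd (k %/ 2 ^ j) : nat)) hk).
rewrite big_mkcond; apply: eq_bigr => j _; case: ifP => // hj.
rewrite divn_small //; apply: leq_trans (ltn_expl j (isT : 1 < 2)).
by rewrite ltnS leqNgt hj.
Qed.

Lemma Weight2 m (b : bool) : Weight (m.*2 + b) = Weight m + b.
Proof.
rewrite (@WeightN (m.*2 + b).+1) // big_ord_recl /= expn0 divn1.
rewrite (@WeightN (m.*2 + b) m); last by lia.
rewrite addnC; congr (_ + _); last by rewrite oddD odd_double; case: b.
apply: eq_bigr => j _; rewrite /bump /= add1n expnS divnMA.
congr (odd (_ %/ _)); rewrite -muln2 divnMDl // divn_small ?addn0 //; by case: (b : bool).
Qed.

Lemma count_double (p : pred nat) M :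
  count p (iota 0 M.*2) = \sum_(0 <= m < M) (p m.*2 + p m.*2.+1).
Proof.
elim: M => [|M IH]; first by rewrite big_geq.
rewrite big_nat_recr // -IH doubleS -[_.+2]addn2 iotaD count_cat /=.
by rewrite add0n addn0 addnA.
Qed.

Lemma countW n i : count (fun k => Weight k == i) (iota 0 (2 ^ n)) = 'C(n, i).
Proof.
elim: n i => [|n IH] i.
  by rewrite expn0 /= addn0 bin0n /Weight big_ord0 eq_sym.
rewrite expnS mul2n count_double.
have e0 m : Weight m.*2 = Weight m by rewrite -[m.*2]addn0 (Weight2 m false) addn0.
have e1 m : Weight m.*2.+1 = (Weight m).+1 by rewrite -addn1 (Weight2 m true) addn1.
under eq_bigr => m _ do rewrite e0 e1.
rewrite big_split /=.
have cs (p : pred nat) N : \sum_(0 <= m < N) p m = count p (iota 0 N).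
  by rewrite countE /index_iota subn0.
rewrite (cs (fun m => Weight m == i)) IH.
case: i => [|i].
  by rewrite big1 ?addn0 ?bin0.
under eq_bigr => m _ do rewrite eqSS.
by rewrite (cs (fun m => Weight m == i)) IH binS.
Qed.


Lemma sizeIB n i : size (IB n i) = 'C(n, i).
Proof. by rewrite /IB size_filter countW. Qed.

Lemma sizeIA1 n i : i <= n -> size (IA1 n i) = size (IB1 n i).
Proof.
move=> hi.
have e1 : size (IA1 n i) = size (IA n i) - count (mem (IB n i)) (IA n i).
  by rewrite /IA1 size_filter -(count_predC (mem (IB n i)) (IA n i)) addKn.
have e2 : size (IB1 n i) = size (IB n i) - count (mem (IA n i)) (IB n i).
  by rewrite /IB1 size_filter -(count_predC (mem (IA n i)) (IB n i)) addKn.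
rewrite e1 e2 sizeIA // sizeIB; congr (_ - _).
rewrite /IA /IB !count_filter; apply: eq_in_count => k hk /=.
by rewrite !mem_filter hk !andbT andbC.
Qed.

Lemma count_mem_sub (s t : seq nat) : uniq s -> uniq t -> {subset s <= t} ->
  count (mem s) t = size s.
Proof.
move=> us ut st; rewrite -size_filter; apply: perm_size; apply: uniq_perm => //.
  exact: filter_uniq.
move=> x; rewrite mem_filter /=; case hx: (x \in s) => //=; exact: st.
Qed.

Lemma has_count1 (q : pred nat) (J : seq nat) w :
  uniq J -> (forall j, q j -> j = w) -> (has q J : nat) = count q J.
Proof.
move=> uJ hq.
have h : count q J <= 1.
  apply: leq_trans (_ : count (pred1 w) J <= 1).
    by apply: sub_count => j /hq ->; rewrite /= eqxx.
  by rewrite count_uniq_mem //; case: (_ \in _).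
rewrite has_count; move: h; case: (count q J) => [|[|]] //.
Qed.

Lemma size_remove (s J : seq nat) (C : nat -> seq nat) (w : nat -> nat) i :
  uniq s -> uniq J -> (forall j, uniq (C j)) -> (forall j, {subset C j <= s}) ->
  (forall j k, k \in C j -> w k = j) ->
  size [seq k <- s | ~~ has (fun j => (j != i) && (k \in C j)) J] =
  size s - \sum_(j <- J | j != i) size (C j).
Proof.
move=> us uJ uC sC wC.
rewrite size_filter -[in size s](count_predC (fun k => has (fun j => (j != i) && (k \in C j)) J) s).
suff -> : count (fun k => has (fun j => (j != i) && (k \in C j)) J) s = \sum_(j <- J | j != i) size (C j) by rewrite addKn.
rewrite countE.
transitivity (\sum_(k <- s) \sum_(j <- J | j != i) (k \in C j : nat)).
  apply: eq_bigr => k _; rewrite (@has_count1 _ _ (w k)) //; last first.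
    by move=> j /andP[_ /wC].
  by rewrite countE [RHS]big_mkcond; apply: eq_bigr => j _; case: (j != i).
rewrite exchange_big; apply: eq_bigr => j _.
by rewrite -countE count_mem_sub.
Qed.

Lemma uniqIC1 n i j : uniq (IC1 n i j).
Proof. by rewrite /IC1 /IA1 /IA; do 3 apply: filter_uniq; apply: iota_uniq. Qed.

Lemma memCb n i j k : k \in ICbar1 n i j -> k \in IC1 n i j.
Proof.
rewrite /ICbar1; case: ifP => // _; case: ifP => _; [exact: mem_take | exact: mem_drop].
Qed.

Lemma uniqCb n i j : uniq (ICbar1 n i j).
Proof.
rewrite /ICbar1; case: ifP => _; first exact: uniqIC1.
by case: ifP => _; [apply: take_uniq | apply: drop_uniq]; apply: uniqIC1.
Qed.

Lemma sizeCb n i j : size (ICbar1 n i j) = minn (gamma1 n i j) (gamma1 n j i).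
Proof.
rewrite /ICbar1; case: ifP => h.
  by rewrite (minn_idPl h).
have hl : gamma1 n j i < gamma1 n i j by rewrite ltnNge h.
rewrite (minn_idPr (ltnW hl)).
case: ifP => _.
  by rewrite size_take -/(gamma1 n i j) hl.
rewrite size_drop -/(gamma1 n i j); lia.
Qed.

Theorem proposition5 (n : nat) : 1 <= n ->
  forall i : nat, i < n -> size (IA2 n i) = size (IB2 n i).
Proof.
move=> _ i hi.
have uJ : uniq (iota 0 n.+1) by apply: iota_uniq.
rewrite /IA2 (@size_remove _ _ (fun j => ICbar1 n i j) Weight) //; first last.
- move=> j k /memCb; rewrite /IC1 mem_filter => /andP[+ _].
  rewrite /IB1 mem_filter => /andP[_]; rewrite /IB mem_filter.
  by case/andP => /eqP.
- move=> j k /memCb; rewrite /IC1 mem_filter; by case/andP.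
- by move=> j; apply: uniqCb.
- by rewrite /IA1 /IA; do 2 apply: filter_uniq; apply: iota_uniq.
rewrite /IB2 (@size_remove _ _ (fun j => ICbar1 n j i) (IStep n)) //; first last.
- move=> j k /memCb; rewrite /IC1 mem_filter => /andP[_].
  rewrite /IA1 mem_filter => /andP[_]; rewrite /IA mem_filter.
  by case/andP => /eqP.
- move=> j k /memCb; rewrite /IC1 mem_filter; by case/andP.
- by move=> j; apply: uniqCb.
- by rewrite /IB1 /IB; do 2 apply: filter_uniq; apply: iota_uniq.
rewrite sizeIA1; last by apply: ltnW.
congr (_ - _); apply: eq_bigr => j _; by rewrite !sizeCb minnC.
Qed.
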